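(* The RMMS is feasible for monotone valuations: for every set $M$ of items, every $n\ge1$, and every $n$ normalized monotone valuations $v_1,\dots,v_n$ on $M$, there exists an allocation $A_1,\dots,A_n$ (a partition of $M$) with $v_i(A_i)\ge \mathrm{RMMS}(M,v_i,n)$ for every $i$.
   Context: Items: a finite set $M$; there are $n$ agents $a_1,\dots,a_n$, agent $a_i$ having valuation $v_i$. A valuation is a function $v:2^M\to\mathbb{R}$ that is normalized ($v(\emptyset)=0$) and monotone ($v(S)\le v(T)$ whenever $S\subseteq T$). An allocation is a partition $A_1,\dots,A_n$ of $M$ (parts may be empty). Residual maximin share: $\mathrm{RMMS}(M,v,n)$ is the largest real $t$ with the following property: for every $0\le k<n$ and every $k$ pairwise disjoint bundles $B_1,\dots,B_k\subseteq M$ with $v(B_j)<t$ for all $j$, the set $M\setminus(B_1\cup\dots\cup B_k)$ can be partitioned into $n-k$ bundles each of value (under $v$) at least $t$. *)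

(* Defs.v *)
From HB Require Import structures.
From mathcomp Require Import all_boot all_order all_algebra.
From mathcomp Require Import boolp classical_sets reals.
Set Implicit Arguments. Unset Strict Implicit. Unset Printing Implicit Defensive.
Import Order.TTheory GRing.Theory Num.Theory.
Local Open Scope ring_scope.

Definition valuation (R : realType) (M : finType) (v : {set M} -> R) : Prop :=
  v finset.set0 = 0 /\ (forall S T : {set M}, S \subset T -> v S <= v T).

Definition is_partition (M : finType) (m : nat) (S : {set M})
    (P : 'I_m -> {set M}) : Prop :=
  (forall i j : 'I_m, i != j -> [disjoint P i & P j]) /\
  \bigcup_(i < m) P i = S.

Definition allocation (M : finType) (n : nat) (A : 'I_n -> {set M}) : Prop :=
  is_partition [set: M] A.

Definition rmms_prop (R : realType) (M : finType) (v : {set M} -> R)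
    (n : nat) (t : R) : Prop :=
  forall (k : nat) (B : 'I_k -> {set M}),
    (k < n)%N ->
    (forall i j : 'I_k, i != j -> [disjoint B i & B j]) ->
    (forall j : 'I_k, v (B j) < t) ->
    exists C : 'I_(n - k) -> {set M},
      is_partition ([set: M] :\: \bigcup_(j < k) B j) C /\
      (forall j : 'I_(n - k), t <= v (C j)).

Definition RMMS (R : realType) (M : finType) (v : {set M} -> R) (n : nat) : R :=
  sup [set t : R | rmms_prop v n t].

(* Main.v *)
Require Import Defs.
From mathcomp Require Import all_boot all_order all_algebra.
From mathcomp Require Import boolp classical_sets reals.
From mathcomp Require Import finset fintype bigop zify lra.
Import Order.TTheory GRing.Theory Num.Theory.
Set Implicit Arguments. Unset Strict Implicit. Unset Printing Implicit Defensive.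
Local Open Scope ring_scope.

Section Hall.
Variables (A Q : finType) (e : A -> Q -> bool) (q0 : Q).

Definition nb (P : {set Q}) (S : {set A}) := [set q in P | [exists j in S, e j q]].

Lemma nb_sub (P : {set Q}) (S : {set A}) : nb P S \subset P.
Proof. by apply/subsetP => q; rewrite inE => /andP[]. Qed.

Lemma in_nb (P : {set Q}) (S : {set A}) q j : q \in P -> j \in S -> e j q -> q \in nb P S.
Proof. by move=> qP jS ejq; rewrite inE qP; apply/existsP; exists j; rewrite jS. Qed.

Lemma hall_aux m : forall (N : {set A}) (P : {set Q}), (#|N| <= m)%N ->
  (forall S : {set A}, S \subset N -> (#|S| <= #|nb P S|)%N) ->
  exists f : A -> Q, {in N &, injective f} /\
    (forall j, j \in N -> f j \in P /\ e j (f j)).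
Proof.
elim: m => [|m IH] N P.
  rewrite leqn0 cards_eq0 => /eqP -> _; exists (fun _ => q0).
  by split; [move=> x; rewrite inE | move=> j; rewrite inE].
move=> hN hall.
case: (boolP [exists S : {set A}, [&& S \proper N, S != set0 & (#|nb P S| <= #|S|)%N]]).
  case/existsP => S /and3P [pSN S0 tight].
  have sSN := proper_sub pSN.
  have cS : (#|S| <= m)%N by have := proper_card pSN; lia.
  have [f1 [inj1 h1]] := IH S P cS (fun T sT => hall T (subset_trans sT sSN)).
  set P2 := P :\: nb P S; set N2 := N :\: S.
  have cN2 : (#|N2| <= m)%N.
    have : (0 < #|S|)%N by rewrite card_gt0.
    rewrite /N2 cardsD (setIidPr sSN); lia.
  have hall2 : forall T : {set A}, T \subset N2 -> (#|T| <= #|nb P2 T|)%N.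
    move=> T sT.
    have dTS : [disjoint T & S].
      apply/pred0P => x /=; apply/negbTE/negP => /andP[xT xS].
      by move: (subsetP sT x xT); rewrite inE xS.
    have sTS : T :|: S \subset N.
      by apply/subsetP => x; rewrite inE => /orP[/(subsetP sT)|/(subsetP sSN)] //; rewrite inE => /andP[].
    have h := hall _ sTS.
    rewrite cardsU (disjoint_setI0 dTS) cards0 subn0 in h.
    have sub : nb P (T :|: S) \subset nb P2 T :|: nb P S.
      apply/subsetP => q; rewrite inE => /andP[qP /existsP[j /andP[jTS ejq]]].
      case qS: (q \in nb P S); first by rewrite inE qS orbT.
      move: jTS; rewrite inE => /orP[jT|jS].
        rewrite inE; apply/orP; left; apply: (in_nb _ jT ejq); by rewrite inE qS qP.
      by rewrite (in_nb qP jS ejq) in qS.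
    have := subset_leq_card sub; rewrite cardsU; lia.
  have [f2 [inj2 h2]] := IH N2 P2 cN2 hall2.
  exists (fun j => if j \in S then f1 j else f2 j); split.
    move=> j1 j2 j1N j2N /=.
    case: ifP => j1S; case: ifP => j2S.
    - exact: inj1.
    - move=> E; have [p1 e1] := h1 _ j1S.
      have := (in_nb p1 j1S e1); rewrite E.
      have : j2 \in N2 by rewrite inE j2S.
      by move/h2 => [+ _]; rewrite inE => /andP[/negbTE ->].
    - move=> E; have [p1 e1] := h1 _ j2S.
      have := (in_nb p1 j2S e1); rewrite -E.
      have : j1 \in N2 by rewrite inE j1S.
      by move/h2 => [+ _]; rewrite inE => /andP[/negbTE ->].
    - by apply: inj2; rewrite inE ?j1S ?j2S.
  move=> j jN; case: ifP => jS; first exact: h1.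
  have : j \in N2 by rewrite inE jS.
  by move/h2 => [+ ?]; rewrite inE => /andP[_ ->].
move/existsPn => noT.
case: (set_0Vmem N) => [-> | [a aN]].
  by exists (fun _ => q0); split; [move=> x; rewrite inE | move=> j; rewrite inE].
have : (0 < #|nb P [set a]|)%N.
  by apply: leq_trans (hall _ _); rewrite ?cards1 // sub1set.
rewrite card_gt0 => /set0Pn [q]; rewrite inE => /andP[qP /existsP[a' /andP[]]].
rewrite inE => /eqP -> eaq.
set N2 := N :\ a; set P2 := P :\ q.
have cN2 : (#|N2| <= m)%N by move: hN; rewrite /N2 (cardsD1 a N) aN; lia.
have hall2 : forall T : {set A}, T \subset N2 -> (#|T| <= #|nb P2 T|)%N.
  move=> T sT; case: (set_0Vmem T) => [-> | [b bT]]; first by rewrite cards0.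
  have pTN : T \proper N.
    rewrite properE; apply/andP; split.
      by apply/subsetP => x /(subsetP sT); rewrite inE => /andP[].
    apply/subsetPn; exists a => //; apply/negP => /(subsetP sT).
    by rewrite !inE eqxx.
  have T0 : T != set0 by apply/set0Pn; exists b.
  have := noT T; rewrite pTN T0 /= -ltnNge => lt.
  have sub : nb P T :\ q \subset nb P2 T.
    apply/subsetP => x; rewrite !inE => /andP[xq /andP[xP ->]].
    by rewrite xq xP.
  have := subset_leq_card sub.
  have := cardsD1 q (nb P T); lia.
have [f2 [inj2 h2]] := IH N2 P2 cN2 hall2.
exists (fun j => if j == a then q else f2 j); split.
  move=> j1 j2 j1N j2N /=.
  case: eqP => [->|j1a]; case: eqP => [->|j2a] //.
  - move=> E; have : j2 \in N2 by rewrite !inE j2N andbT; apply/eqP.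
    by move/h2 => [+ _]; rewrite -E !inE eqxx.
  - move=> E; have : j1 \in N2 by rewrite !inE j1N andbT; apply/eqP.
    by move/h2 => [+ _]; rewrite E !inE eqxx.
  - by apply: inj2; rewrite !inE ?j1N ?j2N andbT; apply/eqP.
move=> j jN; case: eqP => [->|ja]; first by split.
have : j \in N2 by rewrite !inE jN andbT; apply/eqP.
by move/h2 => [+ ?]; rewrite !inE => /andP[_ ->].
Qed.

Lemma ef_aux m : forall (N : {set A}) (P : {set Q}) i, (#|N| <= m)%N ->
  i \in N -> (forall q, q \in P -> e i q) -> (#|N| <= #|P|)%N ->
  exists (X : {set Q}) (Y : {set A}) (f : A -> Q),
    [/\ [/\ X \subset P, X != set0 & Y \subset N], ({in Y &, injective f}),
        f @: Y = X, (forall j, j \in Y -> e j (f j)) &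
        (forall j q, j \in N :\: Y -> q \in X -> ~~ e j q)].
Proof.
elim: m => [|m IH] N P i.
  by rewrite leqn0 cards_eq0 => /eqP ->; rewrite inE.
move=> hN iN iall hNP.
case: (boolP [forall S : {set A}, (S \subset N :\ i) ==> (#|S| <= #|nb P S|)%N]).
  move/forallP => H.
  have [f [injf hf]] : exists f : A -> Q, {in N :\ i &, injective f} /\
    (forall j, j \in N :\ i -> f j \in P /\ e j (f j)).
    apply: (@hall_aux #|N :\ i|) => // S sS; exact: (implyP (H S) sS).
  have : ~~ (P \subset f @: (N :\ i)).
    apply/negP => /subset_leq_card; rewrite card_in_imset //.
    move: hNP; rewrite (cardsD1 i N) iN; lia.
  case/subsetPn => q qP qni.
  set g := fun j => if j == i then q else f j.
  exists (g @: N), N, g; split => //; first split => //.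
  - apply/subsetP => x /imsetP [j jN ->]; rewrite /g; case: eqP => // /eqP ji.
    by have [] := hf j; rewrite // !inE ji jN.
  - by apply/set0Pn; exists (g i); apply/imsetP; exists i.
  - move=> j1 j2 j1N j2N; rewrite /g.
    case: eqP => [->|/eqP j1i]; case: eqP => [->|/eqP j2i] //.
    + move=> E; case/negP: qni; rewrite E; apply/imsetP; exists j2 => //.
      by rewrite !inE j2i.
    + move=> E; case/negP: qni; rewrite -E; apply/imsetP; exists j1 => //.
      by rewrite !inE j1i.
    + by apply: injf; rewrite !inE ?j1i ?j2i.
  - move=> j jN; rewrite /g; case: eqP => [->|/eqP ji]; first exact: iall.
    by have [] := hf j; rewrite // !inE ji jN.
  - by move=> j q'; rewrite setDv inE.
move/forallPn => [S]; rewrite negb_imply -ltnNge => /andP[sS lt].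
have sSN : S \subset N by apply: subset_trans sS (subD1set _ _).
have iS : i \notin S by apply/negP => /(subsetP sS); rewrite !inE eqxx.
have S0 : (0 < #|S|)%N by move: lt; lia.
set N' := N :\: S; set P' := P :\: nb P S.
have cN' : (#|N'| <= m)%N by move: hN; rewrite /N' cardsD (setIidPr sSN); lia.
have iN' : i \in N' by rewrite inE iS iN.
have iall' : forall q, q \in P' -> e i q by move=> q; rewrite inE => /andP[_ /iall].
have hNP' : (#|N'| <= #|P'|)%N.
  rewrite /N' /P' !cardsD (setIidPr sSN) (setIidPr (nb_sub P S)).
  have : (#|S| <= #|N|)%N by apply: subset_leq_card.
  have : (#|nb P S| <= #|P|)%N by apply: subset_leq_card; apply: nb_sub.
  move: hNP lt; lia.
have [X [Y [f [[XP X0 YN] injf fY hf envy]]]] := IH N' P' i cN' iN' iall' hNP'.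
exists X, Y, f; split => //; first split => //.
- by apply: subset_trans XP _; apply: subsetDl.
- by apply: subset_trans YN _; apply: subsetDl.
move=> j q; rewrite inE => /andP[jY jN] qX.
case jS: (j \in S).
  have := subsetP XP q qX; rewrite inE => /andP[qnb qP].
  by apply/negP => ejq; rewrite (in_nb qP jS ejq) in qnb.
by apply: envy qX; rewrite !inE jY jS jN.
Qed.
End Hall.
Section Main.
Variables (R : realType) (M : finType) (n : nat) (v : 'I_n -> {set M} -> R)
  (t : 'I_n -> R).

Definition Good j (U : {set M}) r := forall (I : finType) (B : I -> {set M}),
  (#|I| < r)%N -> (forall a b, a != b -> [disjoint B a & B b]) ->
  (forall a, v j (B a) < t j) -> (forall a, B a \subset ~: U) ->
  exists C : 'I_(r - #|I|) -> {set M},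
    is_partition (~: U :\: \bigcup_(a : I) B a) C /\ (forall p, t j <= v j (C p)).

Lemma good_init j : rmms_prop (v j) n (t j) -> Good j set0 n.
Proof.
move=> H I B hI dB sB _.
have [] := H #|I| (fun l => B (enum_val l)) hI.
- move=> l1 l2 l12; apply: dB; apply: contra l12 => /eqP /enum_val_inj ->.
  by [].
- by move=> l; apply: sB.
move=> C [[dC uC] aC]; exists C; split => //; split => //.
rewrite uC setC0; congr (_ :\: _).
by rewrite (big_enum_val (fun a => B a)).
Qed.

Lemma good_part j U r : Good j U r -> (0 < r)%N ->
  exists C : 'I_r -> {set M}, is_partition (~: U) C /\ (forall p, t j <= v j (C p)).
Proof.
move=> G r0.
have := G void (fun _ => set0); rewrite card_void subn0 => /(_ r0).
case.
- by move=> [].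
- by move=> [].
- by move=> [].
move=> C [[dC uC] aC]; exists C; split => //; split => //.
by rewrite uC big1_eq setD0.
Qed.

Lemma good_step j U r (Q : finType) (C : Q -> {set M}) (X : {set Q}) :
  Good j U r -> (forall p q, p != q -> [disjoint C p & C q]) ->
  (forall p, C p \subset ~: U) -> (forall p, p \in X -> v j (C p) < t j) ->
  (#|X| <= r)%N -> Good j (U :|: \bigcup_(p in X) C p) (r - #|X|).
Proof.
move=> G dC sC sm hX I B hI dB smB sB.
pose SX : finType := {p : Q | p \in X}.
pose I' : finType := (I + SX)%type.
pose B' (x : I') := match x with inl a => B a | inr p => C (val p) end.
have cX : #|SX| = #|X| by rewrite card_sig; apply: eq_card.
have cI' : #|I'| = (#|I| + #|X|)%N by rewrite card_sum cX.
have sCU : forall p, p \in X -> C p \subset U :|: \bigcup_(p in X) C p.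
  move=> p pX; apply/subsetP => x xC; rewrite inE; apply/orP; right.
  by apply/bigcupP; exists p.
have sBU : forall a, B a \subset ~: U.
  move=> a; apply: subset_trans (sB a) _; rewrite setCS; exact: subsetUl.
have := G I' B'.
rewrite cI'.
case.
- by move: hI; lia.
- case=> [a|p] [b|q] ab /=.
  + by apply: dB; apply: contra ab => /eqP ->.
  + rewrite disjoints_subset; apply: subset_trans (sB a) _.
    by rewrite setCS; apply: sCU; apply: valP.
  + rewrite disjoint_sym disjoints_subset; apply: subset_trans (sB b) _.
    by rewrite setCS; apply: sCU; apply: valP.
  + by apply: dC; apply: contra ab => /eqP /val_inj ->.
- by case=> [a|p] /=; [apply: smB | apply: sm; apply: valP].
- by case=> [a|p] /=; [apply: sBU | apply: sC].
rewrite addnC subnDA => C' [[dC' uC'] aC']; exists C'; split => //; split => //.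
rewrite uC' big_sumType /=.
have -> : \bigcup_(p : SX) C (val p) = \bigcup_(p in X) C p.
  apply/setP => x; apply/bigcupP/bigcupP => [[p _ xp]|[p pX xp]].
    by exists (val p) => //; apply: valP.
  by exists (exist _ p pX).
apply/setP => x; rewrite !inE.
by case: (x \in U); case: (x \in \bigcup_(a : I) B a); case: (x \in \bigcup_(p in X) C p).
Qed.

Lemma main_base (U : {set M}) : U = setT ->
  exists A : 'I_n -> {set M},
    [/\ forall j, j \in set0 -> t j <= v j (A j),
        forall j1 j2, j1 \in set0 -> j2 \in set0 -> j1 != j2 -> [disjoint A j1 & A j2]
      & \bigcup_(j in set0) A j = ~: U].
Proof.
move=> ->; exists (fun _ => set0); split; first by move=> j; rewrite inE.
  by move=> j1 j2; rewrite inE.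
by rewrite big_set0 setCT.
Qed.

Lemma main_rec m : forall (N : {set 'I_n}) (U : {set M}), (#|N| <= m)%N ->
  (N = set0 -> U = setT) -> (forall j, j \in N -> Good j U #|N|) ->
  exists A : 'I_n -> {set M},
    [/\ forall j, j \in N -> t j <= v j (A j),
        forall j1 j2, j1 \in N -> j2 \in N -> j1 != j2 -> [disjoint A j1 & A j2]
      & \bigcup_(j in N) A j = ~: U].
Proof.
elim: m => [|m IH] N U.
  rewrite leqn0 cards_eq0 => /eqP N0 hU _; rewrite N0; apply: main_base; exact: hU.
move=> hN hU G.
case: (set_0Vmem N) => [N0|[i iN]]; first by rewrite N0; apply: main_base; exact: hU.
have r0 : (0 < #|N|)%N by rewrite card_gt0; apply/set0Pn; exists i.
have [C [[dC uC] aC]] := good_part (G i iN) r0.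
have hc : (#|N| <= #|[set: 'I_#|N|]|)%N by rewrite cardsT card_ord.
have [X [Y [f [[XP X0 YN] injf fY hf envy]]]] :=
  @ef_aux _ _ (fun j p => t j <= v j (C p)) (Ordinal r0) #|N| N setT i (leqnn _) iN
     (fun q _ => aC q) hc.
set N' := N :\: Y; set U' := U :|: \bigcup_(p in X) C p.
have cXY : #|X| = #|Y| by rewrite -fY card_in_imset.
have cN' : #|N'| = (#|N| - #|X|)%N by rewrite /N' cardsD (setIidPr YN) cXY.
have Y0 : (0 < #|Y|)%N.
  rewrite -cXY card_gt0; exact: X0.
have hX : (#|X| <= #|N|)%N by rewrite cXY; apply: subset_leq_card.
have sC : forall p, C p \subset ~: U.
  by move=> p; rewrite -uC; apply: (bigcup_sup p).
have cN'm : (#|N'| <= m)%N by move: hN; rewrite cN'; lia.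
have hU' : N' = set0 -> U' = setT.
  move=> N'0.
  have XT : X = setT.
    apply/eqP; rewrite eqEcard subsetT cardsT card_ord.
    by move: (cN'); rewrite N'0 cards0; lia.
  rewrite /U' XT; apply/setP => x; rewrite !inE.
  case xU: (x \in U) => //=.
  have : x \in ~: U by rewrite inE xU.
  rewrite -uC => /bigcupP [p _ xp]; apply/bigcupP; exists p => //; exact: in_setT.
have G' : forall j, j \in N' -> Good j U' #|N'|.
  move=> j jN'; rewrite cN'.
  have jN : j \in N by move: jN'; rewrite inE => /andP[].
  apply: (good_step (G j jN) dC sC) => // p pX.
  by rewrite ltNge; apply: envy pX.
have [A2 [aA2 dA2 uA2]] := IH N' U' cN'm hU' G'.
have sA2 : forall j, j \in N' -> A2 j \subset ~: U'.
  by move=> j jN'; rewrite -uA2; apply: (bigcup_sup j).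
have fX : forall j, j \in Y -> f j \in X by move=> j jY; rewrite -fY; apply: imset_f.
have sCU : forall p, p \in X -> C p \subset U'.
  move=> p pX; apply/subsetP => x xC; rewrite inE; apply/orP; right.
  by apply/bigcupP; exists p.
exists (fun j => if j \in Y then C (f j) else A2 j); split.
- move=> j jN; case: ifP => jY; first exact: hf.
  by apply: aA2; rewrite inE jY jN.
- move=> j1 j2 j1N j2N j12.
  case: ifP => j1Y; case: ifP => j2Y.
  + apply: dC; apply: contra j12 => /eqP E; apply/eqP; exact: injf E.
  + rewrite disjoint_sym disjoints_subset; apply: subset_trans (sA2 j2 _) _.
      by rewrite inE j2Y j2N.
    by rewrite setCS; apply: sCU; apply: fX.
  + rewrite disjoints_subset; apply: subset_trans (sA2 j1 _) _.
      by rewrite inE j1Y j1N.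
    by rewrite setCS; apply: sCU; apply: fX.
  + by apply: dA2; rewrite // inE ?j1Y ?j2Y.
have NYN' : N = Y :|: N'.
  apply/setP => x; rewrite !inE; case xY: (x \in Y) => //=.
  by rewrite (subsetP YN x xY).
rewrite NYN' big_setU /=; last by move=> ?; apply: setUid.
have -> : \bigcup_(j in Y) (if j \in Y then C (f j) else A2 j) = \bigcup_(p in X) C p.
  rewrite -fY big_imset //; apply: eq_bigr => j ->; by [].
have -> : \bigcup_(j in N') (if j \in Y then C (f j) else A2 j) = ~: U'.
  rewrite -uA2; apply: eq_bigr => j; rewrite inE => /andP[/negbTE -> _]; by [].
apply/setP => x; rewrite !inE.
case xC: (x \in \bigcup_(p in X) C p); last by rewrite orbF.
move: xC => /bigcupP [p _ xp]; move: (subsetP (sC p) x xp); rewrite inE => -> //.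
Qed.

End Main.
Lemma thr (R : realType) (M : finType) (w : {set M} -> R) n :
  valuation w -> (0 < n)%N ->
  exists t, rmms_prop w n t /\ (forall S, t <= w S -> RMMS w n <= w S).
Proof.
move=> [w0 wm] n0.
have wge0 : forall S, 0 <= w S by move=> S; rewrite -w0; apply: wm; apply: sub0set.
have n0' : (0 < n - 0)%N by rewrite subn0.
have E0 : rmms_prop w n 0.
  move=> k B kn dB sB; case: k B kn dB sB => [|k] B kn dB sB; last first.
    by have := sB ord0; rewrite ltNge wge0.
  exists (fun p : 'I_(n - 0) => if val p == 0%N then setT else set0).
  split; [split|by move=> p; apply: wge0].
    move=> p q pq; case: ifP => hp; case: ifP => hq.
    - by case/eqP: pq; apply: val_inj; rewrite (eqP hp) (eqP hq).
    - by rewrite disjoints_subset setC0 subsetT.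
    - by rewrite disjoints_subset sub0set.
    - by rewrite disjoints_subset sub0set.
  rewrite big_ord0 setD0; apply/setP => x; rewrite inE; apply/bigcupP.
  by exists (Ordinal n0') => //=; rewrite inE.
have ub : forall t, rmms_prop w n t -> t <= w setT.
  move=> t H; have [] := H 0%N (fun j : 'I_0 => set0) n0; [by case|by case|].
  move=> C [[_ uC] aC]; apply: le_trans (aC (Ordinal n0')) _; apply: wm; apply: subsetT.
have hs : has_sup [set t | rmms_prop w n t].
  split; first by exists 0.
  by exists (w setT) => t Ht; exact: ub Ht.
set s := sup [set t | rmms_prop w n t].
set m0 := \big[Order.max/(s-1)]_(S : {set M} | w S < s) w S.
have m0s : m0 < s by apply: bigmax_lt => //; lra.
have he : 0 < s - m0 by rewrite subr_gt0.
have [t Et mt] := sup_adherent he hs.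
exists t; split => //.
move=> S tS; rewrite /RMMS -/s; rewrite leNgt; apply/negP => Ss.
have h : w S <= m0 by rewrite /m0; apply: le_bigmax_cond.
move: mt tS h; rewrite -/s; lra.
Qed.

Theorem mainTheorem2 (R : realType) (M : finType) (n : nat)
    (v : 'I_n -> {set M} -> R) :
  (0 < n)%N ->
  (forall i : 'I_n, valuation (v i)) ->
  exists A : 'I_n -> {set M},
    allocation A /\ (forall i : 'I_n, RMMS (v i) n <= v i (A i)).
Proof.
move=> n0 vv.
have [t Ht] : exists t : 'I_n -> R, forall j, rmms_prop (v j) n (t j) /\
    (forall S, t j <= v j S -> RMMS (v j) n <= v j S).
  have [f hf] := boolp.choice (fun j => thr (vv j) n0); by exists f.
have hU : [set: 'I_n] = set0 -> (set0 : {set M}) = setT.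
  by move=> /setP /(_ (Ordinal n0)); rewrite !inE.
have G : forall j, j \in [set: 'I_n] -> Good v t j set0 #|[set: 'I_n]|.
  by move=> j _; rewrite cardsT card_ord; apply: good_init; exact: (Ht j).1.
have [A [aA dA uA]] := @main_rec R M n v t #|[set: 'I_n]| [set: 'I_n] set0 (leqnn _) hU G.
exists A; split.
  split; first by move=> i j ij; apply: dA; rewrite ?inE.
  rewrite -setC0 -uA; apply: eq_bigl => j; by rewrite inE.
by move=> j; apply: (Ht j).2; apply: aA; exact: in_setT.
Qed.
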